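(* A snake graph $\mathcal{G}$ is palindromic of even length if and only if it has a rotational symmetry at its center tile.
   Context: A tile is a unit square in the plane with sides parallel to the coordinate axes, viewed as a graph with 4 vertices and 4 edges. A snake graph with $d\ge 1$ tiles is a planar graph which is the union of tiles $G_1,\dots,G_d$ such that for each $i$, $G_{i+1}$ is the translate of $G_i$ by $(0,1)$ or by $(1,0)$; thus $G_i$ and $G_{i+1}$ share exactly one edge $e_i$ (the north edge of $G_i$, or its east edge). Snake graphs are considered up to translation. A sign function on a snake graph is a map $f$ from its set of edges to $\{+,-\}$ such that in every tile the north and west edges have the same sign, the south and east edges have the same sign, and the north and south edges have opposite signs. For a sequence $(a_1,\dots,a_n)$ of positive integers with $d=a_1+\cdots+a_n-1\ge 1$, the snake graph $\mathcal{G}[a_1,\dots,a_n]$ is the unique snake graph with tiles $G_1,\dots,G_d$ for which there exist a sign function $f$ and an edge $e_d\in\{\text{north edge of }G_d,\ \text{east edge of }G_d\}$ such that, with $e_0$ the south edge of $G_1$ and $e_i$ ($1\le i\le d-1$) the edge shared by $G_i$ and $G_{i+1}$, the sequence $(f(e_0),f(e_1),\dots,f(e_d))$ consists of $a_1$ copies of a sign $s$, followed by $a_2$ copies of $-s$, then $a_3$ copies of $s$, and so on alternately. A snake graph $\mathcal{G}$ is called palindromic of even length if $\mathcal{G}=\mathcal{G}[a_1,\dots,a_n]$ for some sequence of positive integers with $n$ even and $(a_1,\dots,a_n)=(a_n,\dots,a_1)$. A snake graph has a rotational symmetry at its center tile if it has a tile $G_i$ such that the rotation by $180^\circ$ about the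 center of $G_i$ maps the graph onto itself. *)

(* Defs.v *)
From Stdlib Require Import ZArith List Arith Lia.
Import ListNotations.
Open Scope Z_scope.

Definition point := (Z * Z)%type.
Definition seg := (point * point)%type.

(* A tile is identified by its south-west corner (x,y): the unit square
   [x,x+1] x [y,y+1]. Its four sides, each written with the smaller
   (lexicographically) endpoint first, so that a side shared by two tiles
   gets the same representation. *)
Definition south (t : point) : seg := ((fst t, snd t), (fst t + 1, snd t)).
Definition north (t : point) : seg := ((fst t, snd t + 1), (fst t + 1, snd t + 1)).
Definition west  (t : point) : seg := ((fst t, snd t), (fst t, snd t + 1)).
Definition east  (t : point) : seg := ((fst t + 1, snd t), (fst t + 1, snd t + 1)).

Definition corners (t : point) : list point :=
  [(fst t, snd t); (fst t + 1, snd t); (fst t, snd t + 1); (fst t + 1, snd t + 1)].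
Definition sides (t : point) : list seg := [south t; north t; west t; east t].

(* A snake graph with d >= 1 tiles, up to translation, is encoded by the list
   ds of its d-1 steps: true = G_{i+1} is G_i translated by (0,1) (north),
   false = translated by (1,0) (east). Tile G_{i+1} (0-indexed: tile i) has
   south-west corner tile_pos ds i, with G_1 placed at the origin. *)
Fixpoint tile_pos (ds : list bool) (i : nat) : point :=
  match i with
  | O => (0, 0)
  | S k => let p := tile_pos ds k in
           if nth k ds false then (fst p, snd p + 1) else (fst p + 1, snd p)
  end.

Definition ntiles (ds : list bool) : nat := S (length ds).

Definition snake_vertex (ds : list bool) (p : point) : Prop :=
  exists i, (i < ntiles ds)%nat /\ In p (corners (tile_pos ds i)).

Definition snake_edge (ds : list bool) (p q : point) : Prop :=
  exists i, (i < ntiles ds)%nat /\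
    exists s, In s (sides (tile_pos ds i)) /\ (s = (p, q) \/ s = (q, p)).

(* Rotation by 180 degrees about the center (x+1/2, y+1/2) of tile t. *)
Definition rot180 (t : point) (p : point) : point :=
  (2 * fst t + 1 - fst p, 2 * snd t + 1 - snd p).

Definition rot_sym_center (ds : list bool) : Prop :=
  exists i, (i < ntiles ds)%nat /\
    let t := tile_pos ds i in
    (forall p, snake_vertex ds p <-> snake_vertex ds (rot180 t p)) /\
    (forall p q, snake_edge ds p q <-> snake_edge ds (rot180 t p) (rot180 t q)).

(* Sign function (signs + / - encoded as booleans). It is given as a function
   on all unit segments; only its values on the edges of the graph matter. *)
Definition sign_function (ds : list bool) (f : seg -> bool) : Prop :=
  forall i, (i < ntiles ds)%nat ->
    let t := tile_pos ds i in
    f (north t) = f (west t) /\ f (south t) = f (east t) /\ f (north t) <> f (south t).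

(* e_0 = south edge of G_1; e_i (1 <= i <= d-1) = edge shared by G_i, G_{i+1}. *)
Definition shared_edge (ds : list bool) (k : nat) : seg :=
  if nth k ds false then north (tile_pos ds k) else east (tile_pos ds k).

Definition inner_edges (ds : list bool) : list seg :=
  south (tile_pos ds 0) :: map (shared_edge ds) (seq 0 (length ds)).

Fixpoint blocks (s : bool) (a : list nat) : list bool :=
  match a with
  | [] => []
  | x :: a' => repeat s x ++ blocks (negb s) a'
  end.

(* snake_of a ds : the snake graph ds is G[a_1,...,a_n]
   (d = a_1 + ... + a_n - 1 >= 1 tiles, and the defining sign condition). *)
Definition snake_of (a : list nat) (ds : list bool) : Prop :=
  ntiles ds = (list_sum a - 1)%nat /\
  exists (f : seg -> bool) (ed : seg) (s : bool),
    sign_function ds f /\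
    (ed = north (tile_pos ds (length ds)) \/ ed = east (tile_pos ds (length ds))) /\
    map f (inner_edges ds) ++ [f ed] = blocks s a.

Definition palindromic_even (ds : list bool) : Prop :=
  exists a : list nat,
    Forall (fun x => (0 < x)%nat) a /\ Nat.Even (length a) /\
    a = rev a /\ snake_of a ds.

(* Main.v *)
Require Import Defs.
From Stdlib Require Import ZArith List Arith Lia Bool.
Import ListNotations.
Local Open Scope nat_scope.
Notation TP := tile_pos.

Lemma nat_even_S j : Nat.even (S j) = negb (Nat.even j).
Proof. rewrite Nat.even_succ, <- Nat.negb_even. reflexivity. Qed.

Lemma Zeven_p1 z : Z.even (z + 1) = negb (Z.even z).
Proof. rewrite Z.even_add. destruct (Z.even z); reflexivity. Qed.

Lemma Zeven_nat n : Z.even (Z.of_nat n) = Nat.even n.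
Proof. induction n. reflexivity. rewrite Nat2Z.inj_succ, <- Z.add_1_r, Zeven_p1, IHn, nat_even_S. reflexivity. Qed.

Lemma even_rev L j : Nat.Even L -> j <= L + 1 -> Nat.even (L + 1 - j) = negb (Nat.even j).
Proof.
  intros [h Hh] Hj.
  assert (E: Nat.even ((L + 1 - j) + j) = false).
  { replace (L + 1 - j + j) with (2 * h + 1) by lia. apply Nat.even_odd. }
  rewrite Nat.even_add in E. destruct (Nat.even (L+1-j)), (Nat.even j); simpl in *; congruence.
Qed.

Lemma blocks_length s a : length (blocks s a) = list_sum a.
Proof. revert s; induction a; intros s; simpl; [reflexivity|]. rewrite length_app, repeat_length, IHa. reflexivity. Qed.

Lemma blocks_negb s a : map negb (blocks s a) = blocks (negb s) a.
Proof. revert s; induction a; intros s; simpl; [reflexivity|].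
  rewrite map_app, IHa. f_equal. clear. induction a; simpl; congruence. Qed.

Fixpoint sgn (s : bool) (n : nat) : bool := match n with 0 => s | S n => sgn (negb s) n end.

Lemma sgn_neg s n : sgn (negb s) n = negb (sgn s n).
Proof. revert s; induction n; intros s; simpl; auto. Qed.

Lemma sgn_even s n : sgn s n = if Nat.even n then s else negb s.
Proof. revert s; induction n; intros s; [reflexivity|]. change (sgn s (S n)) with (sgn (negb s) n). rewrite IHn, nat_even_S.
  destruct (Nat.even n), s; reflexivity. Qed.

Lemma blocks_app s a b : blocks s (a ++ b) = blocks s a ++ blocks (sgn s (length a)) b.
Proof. revert s; induction a; intros s; simpl; auto. rewrite IHa, app_assoc. reflexivity. Qed.

Lemma blocks_rev s a : rev (blocks s a) = blocks (sgn s (length a + 1)) (rev a).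
Proof.
  revert s; induction a as [|x a IH]; intros s; simpl; auto.
  rewrite rev_app_distr, IH, rev_repeat, blocks_app. simpl. rewrite app_nil_r. f_equal.
  rewrite length_rev, !sgn_even.
  replace (length a + 1) with (S (length a)) by lia. rewrite nat_even_S.
  destruct (Nat.even (length a)), s; reflexivity.
Qed.

Lemma peel s x x' r r' :
  (r = [] \/ exists tl, r = negb s :: tl) -> (r' = [] \/ exists tl, r' = negb s :: tl) ->
  repeat s x ++ r = repeat s x' ++ r' -> x = x' /\ r = r'.
Proof.
  revert x'; induction x; intros [|x'] Hr Hr' E; simpl in E.
  - auto.
  - destruct Hr as [->|[tl ->]]; [discriminate|]. injection E; destruct s; discriminate.
  - destruct Hr' as [->|[tl ->]]; [discriminate|]. injection E; destruct s; discriminate.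
  - injection E; intros E'. destruct (IHx x' Hr Hr' E'); auto.
Qed.

Lemma blocks_head t r : Forall (fun x => 0 < x) r -> blocks t r = [] \/ exists tl, blocks t r = t :: tl.
Proof. intros H; destruct H as [|x r Hx _]; simpl; auto. right. destruct x; [lia|]. simpl. eauto. Qed.

Lemma blocks_uniq a : forall s a' s', Forall (fun x => 0 < x) a -> Forall (fun x => 0 < x) a' ->
  blocks s a = blocks s' a' -> a = a' /\ (a = [] \/ s = s').
Proof.
  induction a as [|x r IH]; intros s a' s' Ha Ha' E.
  - destruct Ha' as [|x' r' Hx' _]; auto. simpl in E. destruct x'; [lia|]. discriminate.
  - inversion Ha; subst. destruct Ha' as [|x' r' Hx' Hr'].
    + simpl in E. destruct x; [lia|]. discriminate.
    + simpl in E. assert (s = s').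
      { destruct x, x'; try lia. simpl in E. congruence. }
      subst s'. apply peel in E.
      * destruct E as [-> E]. destruct (IH _ _ _ H2 Hr' E). subst; auto.
      * apply blocks_head; auto.
      * apply blocks_head; auto.
Qed.

Lemma blocks_exist w : exists s a, Forall (fun x => 0 < x) a /\ blocks s a = w.
Proof.
  induction w as [|y w [s [a [Ha E]]]].
  - exists true, []; auto.
  - destruct a as [|x r].
    + simpl in E; subst. exists y, [1]. split; auto. 
    + destruct (Bool.bool_dec s y).
      * subst. exists y, (S x :: r). inversion Ha; subst. split; auto.
      * exists y, (1 :: x :: r). split; auto. simpl. rewrite <- E.
        destruct s, y; try congruence; reflexivity.
Qed.

Lemma antipal_of_pal s a : Forall (fun x => 0 < x) a -> Nat.Even (length a) -> a = rev a ->
  rev (blocks s a) = map negb (blocks s a).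
Proof.
  intros _ He Hp. rewrite blocks_rev, <- Hp, blocks_negb, sgn_even.
  replace (length a + 1) with (S (length a)) by lia. rewrite nat_even_S.
  apply Nat.even_spec in He. rewrite He. reflexivity.
Qed.

Lemma pal_of_antipal s a : Forall (fun x => 0 < x) a -> a <> [] ->
  rev (blocks s a) = map negb (blocks s a) -> Nat.Even (length a) /\ a = rev a.
Proof.
  intros Ha Hne E. rewrite blocks_rev, blocks_negb in E.
  apply blocks_uniq in E; [|apply Forall_rev; auto| auto].
  destruct E as [E1 [E2|E2]]. { destruct a; [congruence|]. simpl in E2. destruct (rev a); discriminate. }
  split; [|congruence].
  rewrite sgn_even in E2. replace (length a + 1) with (S (length a)) in E2 by lia.
  rewrite nat_even_S in E2. apply Nat.even_spec. destruct (Nat.even (length a)), s; simpl in *; congruence.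
Qed.

Lemma tp_step ds k :
  (fst (TP ds (S k)) = fst (TP ds k) /\ snd (TP ds (S k)) = (snd (TP ds k) + 1)%Z /\ nth k ds false = true) \/
  (fst (TP ds (S k)) = (fst (TP ds k) + 1)%Z /\ snd (TP ds (S k)) = snd (TP ds k) /\ nth k ds false = false).
Proof. simpl. destruct (nth k ds false); simpl; auto. Qed.

Lemma tp_sum ds j : (fst (TP ds j) + snd (TP ds j) = Z.of_nat j)%Z.
Proof. induction j. reflexivity. destruct (tp_step ds j) as [(H1&H2&_)|(H1&H2&_)]; rewrite H1, H2; lia. Qed.

Lemma tp_mono ds m n : m <= n -> (fst (TP ds m) <= fst (TP ds n) /\ snd (TP ds m) <= snd (TP ds n))%Z.
Proof. intros H; induction H as [|n H IH]. lia.
  destruct (tp_step ds n) as [(H1&H2&_)|(H1&H2&_)]; rewrite H1, H2; lia. Qed.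

Lemma vertex_sum ds p : snake_vertex ds p -> (0 <= fst p + snd p <= Z.of_nat (length ds) + 2)%Z.
Proof.
  intros [m [Hm Hin]]. unfold ntiles in Hm. pose proof (tp_sum ds m).
  unfold corners in Hin; simpl in Hin. destruct Hin as [<-|[<-|[<-|[<-|[]]]]]; simpl; lia.
Qed.

Lemma vertex_level ds j p : j <= length ds -> snake_vertex ds p -> (fst p + snd p = Z.of_nat j + 1)%Z ->
  (fst p = fst (TP ds j) \/ fst p = fst (TP ds j) + 1)%Z.
Proof.
  intros Hj [m [Hm Hin]] Hs. pose proof (tp_sum ds m). pose proof (tp_sum ds j).
  destruct (le_lt_dec m j) as [Hmj|Hmj].
  - pose proof (tp_mono ds m j Hmj).
    unfold corners in Hin; simpl in Hin. destruct Hin as [<-|[<-|[<-|[<-|[]]]]]; simpl in *; lia.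
  - pose proof (tp_mono ds j m (Nat.lt_le_incl _ _ Hmj)).
    unfold corners in Hin; simpl in Hin. destruct Hin as [<-|[<-|[<-|[<-|[]]]]]; simpl in *; lia.
Qed.

Lemma rot_invol t p : rot180 t (rot180 t p) = p.
Proof. destruct p as [x y]; unfold rot180; simpl. f_equal; lia. Qed.

Lemma nth_eqb ds k : nth k ds false = Z.eqb (fst (TP ds (S k))) (fst (TP ds k)).
Proof. destruct (tp_step ds k) as [(H1&H2&H3)|(H1&H2&H3)]; rewrite H1, H3.
  - rewrite Z.eqb_refl; auto.
  - symmetry. apply Z.eqb_neq. lia. Qed.

Lemma rot_pal ds : rot_sym_center ds ->
  Nat.Even (length ds) /\ forall k, k < length ds -> nth (length ds - 1 - k) ds false = nth k ds false.
Proof.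
  intros [i [Hi [HV _]]]. unfold ntiles in Hi.
  set (L := length ds).
  pose proof (tp_sum ds i) as Hti. 
  assert (H0: snake_vertex ds (0,0)%Z).
  { exists 0; split; [unfold ntiles; lia | left; reflexivity]. }
  apply HV, vertex_sum in H0. unfold rot180 in H0; cbn [fst snd] in H0.
  assert (HN: snake_vertex ds (fst (TP ds L) + 1, snd (TP ds L) + 1)%Z).
  { exists L; split; [unfold ntiles; lia | simpl; auto]. }
  rewrite <- (rot_invol (TP ds i)) in HN. apply (proj2 (HV _)), vertex_sum in HN.
  unfold rot180 in HN; cbn [fst snd] in HN. pose proof (tp_sum ds L).
  assert (HL: L = 2 * i) by lia.
  assert (key: forall j, j <= L -> fst (TP ds (L - j)) = (2 * fst (TP ds i) - fst (TP ds j))%Z).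
  { intros j Hj. pose proof (tp_sum ds j).
    assert (P1: snake_vertex ds (fst (TP ds j), snd (TP ds j) + 1)%Z).
    { exists j; split; [unfold ntiles; lia | unfold corners; simpl; tauto]. }
    assert (P2: snake_vertex ds (fst (TP ds j) + 1, snd (TP ds j))%Z).
    { exists j; split; [unfold ntiles; lia | unfold corners; simpl; tauto]. }
    apply HV in P1, P2.
    apply vertex_level with (j := L - j) in P1; [|lia| unfold rot180; cbn [fst snd]; lia].
    apply vertex_level with (j := L - j) in P2; [|lia| unfold rot180; cbn [fst snd]; lia].
    unfold rot180 in P1, P2; cbn [fst snd] in P1, P2. lia. }
  split.
  - exists i; lia.
  - intros k Hk. rewrite !nth_eqb.
    replace (S (L - 1 - k)) with (L - k) by lia. replace (L - 1 - k) with (L - S k) by lia.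
    rewrite !key by lia.
    destruct (Z.eqb_spec (fst (TP ds (S k))) (fst (TP ds k))),
             (Z.eqb_spec (2 * fst (TP ds i) - fst (TP ds k)) (2 * fst (TP ds i) - fst (TP ds (S k))))%Z; auto; lia.
Qed.

Definition E ds (ed : seg) (j : nat) : seg :=
  match j with 0 => south (TP ds 0) | S k => if k <? length ds then shared_edge ds k else ed end.

Lemma w_eq ds (f : seg -> bool) ed :
  map f (inner_edges ds) ++ [f ed] = map (fun j => f (E ds ed j)) (seq 0 (length ds + 2)).
Proof.
  replace (length ds + 2) with (S (S (length ds))) by lia.
  rewrite seq_S, map_app. unfold inner_edges. cbn [seq map app].
  f_equal. f_equal.
  - rewrite <- seq_shift, !map_map. apply map_ext_in. intros k Hk. apply in_seq in Hk.
    cbn [E]. replace (k <? length ds) with true; [reflexivity|]. symmetry; apply Nat.ltb_lt; lia.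
  - simpl (0 + _). cbn [E]. rewrite Nat.ltb_irrefl. reflexivity.
Qed.

Lemma rev_map_seq (g : nat -> bool) n : rev (map g (seq 0 n)) = map (fun j => g (n - 1 - j)) (seq 0 n).
Proof.
  induction n; [reflexivity|].
  rewrite seq_S at 1. rewrite map_app, rev_app_distr, IHn.
  change (seq 0 (S n)) with (0 :: seq 1 n). rewrite <- seq_shift. simpl. rewrite map_map.
  f_equal; [f_equal; lia|]. apply map_ext; intros; f_equal; lia.
Qed.

Lemma map_seq_inv (g h : nat -> bool) s : map g s = map h s -> forall x, In x s -> g x = h x.
Proof. induction s; simpl; intros E x Hx; [tauto|]. injection E; intros. destruct Hx; subst; auto. Qed.

Lemma antipal_pointwise (W : nat -> bool) n :
  rev (map W (seq 0 n)) = map negb (map W (seq 0 n)) <-> forall j, j < n -> W (n - 1 - j) = negb (W j).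
Proof.
  rewrite rev_map_seq, map_map. split.
  - intros H j Hj. apply (map_seq_inv _ _ _ H). apply in_seq; lia.
  - intros H. apply map_ext_in. intros j Hj. apply in_seq in Hj. apply H; lia.
Qed.

Definition Bf ds (bed : bool) (j : nat) : bool :=
  match j with 0 => true | S k => if k <? length ds then nth k ds false else bed end.

Lemma entry ds ed bed j : j <= length ds ->
  E ds ed j = if Bf ds bed j then south (TP ds j) else west (TP ds j).
Proof.
  intros Hj. destruct j as [|k]; [reflexivity|].
  cbn [E Bf]. replace (k <? length ds) with true by (symmetry; apply Nat.ltb_lt; lia).
  unfold shared_edge. cbn [tile_pos].
  destruct (nth k ds false); destruct (TP ds k); reflexivity.
Qed.

Lemma exit_ (ds : list bool) (bed : bool) (j : nat) : j <= length ds ->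
  E ds (if bed then north (TP ds (length ds)) else east (TP ds (length ds))) (S j)
  = if Bf ds bed (S j) then north (TP ds j) else east (TP ds j).
Proof.
  intros Hj. cbn [E Bf]. destruct (Nat.ltb_spec j (length ds)).
  - reflexivity.
  - replace j with (length ds) by lia. reflexivity.
Qed.

Lemma recur (ds : list bool) (f : seg -> bool) (bed : bool) (j : nat) : sign_function ds f -> j <= length ds ->
  let ed := if bed then north (TP ds (length ds)) else east (TP ds (length ds)) in
  f (E ds ed (S j)) = if Bool.eqb (Bf ds bed j) (Bf ds bed (S j)) then negb (f (E ds ed j)) else f (E ds ed j).
Proof.
  intros Hs Hj ed. rewrite (entry ds ed bed j Hj). unfold ed. rewrite (exit_ ds bed j Hj).
  destruct (Hs j ltac:(unfold ntiles; lia)) as (H1 & H2 & H3).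
  destruct (Bf ds bed j), (Bf ds bed (S j)); simpl;
  destruct (f (north (TP ds j))), (f (south (TP ds j))), (f (west (TP ds j))), (f (east (TP ds j)));
  simpl in *; congruence.
Qed.

Lemma inv_lemma (W B : nat -> bool) n :
  (forall j, j < n -> W (S j) = if Bool.eqb (B j) (B (S j)) then negb (W j) else W j) ->
  forall j, j <= n -> xorb (W j) (xorb (B j) (Nat.even j)) = xorb (W 0) (xorb (B 0) true).
Proof.
  intros H j; induction j; intros Hj; [reflexivity|].
  rewrite H by lia. rewrite nat_even_S, <- IHj by lia.
  destruct (W j), (B j), (B (S j)), (Nat.even j); reflexivity.
Qed.

Lemma pal_from_anti (W B : nat -> bool) L :
  (forall j, j < L + 1 -> W (S j) = if Bool.eqb (B j) (B (S j)) then negb (W j) else W j) ->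
  (forall j, j < L + 2 -> W (L + 2 - 1 - j) = negb (W j)) ->
  Nat.Even L /\ forall j, j <= L + 1 -> B (L + 1 - j) = B j.
Proof.
  intros Hr Ha. destruct (Nat.Even_or_Odd L) as [He|[h Hh]].
  - split; auto. intros j Hj.
    pose proof (inv_lemma W B (L+1) Hr) as I.
    pose proof (I j Hj) as I1. pose proof (I (L + 1 - j) ltac:(lia)) as I2.
    pose proof (Ha j ltac:(lia)) as A. replace (L + 2 - 1 - j) with (L + 1 - j) in A by lia.
    rewrite (even_rev L j He Hj) in I2. rewrite A in I2. rewrite <- I1 in I2.
    destruct (W j), (B j), (B (L + 1 - j)), (Nat.even j); simpl in *; congruence.
  - exfalso. pose proof (Ha (h + 1) ltac:(lia)) as A.
    replace (L + 2 - 1 - (h + 1)) with (h + 1) in A by lia. destruct (W (h + 1)); discriminate.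
Qed.

Ltac peq := match goal with |- (?a, ?b) = (?c, ?d) => apply (f_equal2 pair); peq | |- _ => lia end.

Lemma tp_pal ds : (forall k, k < length ds -> nth (length ds - 1 - k) ds false = nth k ds false) ->
  forall j, j <= length ds ->
  (fst (TP ds (length ds - j)) + fst (TP ds j) = fst (TP ds (length ds)) /\
   snd (TP ds (length ds - j)) + snd (TP ds j) = snd (TP ds (length ds)))%Z.
Proof.
  intros Hp j. induction j as [|j IH]; intros Hj.
  - rewrite Nat.sub_0_r. cbn [tile_pos fst snd]. lia.
  - specialize (IH ltac:(lia)). replace (length ds - j) with (S (length ds - S j)) in IH by lia.
    pose proof (Hp j ltac:(lia)) as P. replace (length ds - 1 - j) with (length ds - S j) in P by lia.
    destruct (tp_step ds (length ds - S j)) as [(H1&H2&H3)|(H1&H2&H3)];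
    destruct (tp_step ds j) as [(H4&H5&H6)|(H4&H5&H6)]; try congruence; lia.
Qed.

Lemma pal_rot ds : Nat.Even (length ds) ->
  (forall k, k < length ds -> nth (length ds - 1 - k) ds false = nth k ds false) -> rot_sym_center ds.
Proof.
  intros [h Hh] Hp. pose proof (tp_pal ds Hp) as K.
  pose proof (K h ltac:(lia)) as Kh. replace (length ds - h) with h in Kh by lia.
  set (t := TP ds h).
  assert (KV : forall m, m <= length ds ->
     (fst (TP ds (length ds - m)) = 2 * fst t - fst (TP ds m) /\
      snd (TP ds (length ds - m)) = 2 * snd t - snd (TP ds m))%Z).
  { intros m Hm. pose proof (K m Hm). unfold t. lia. }
  assert (V1 : forall p, snake_vertex ds p -> snake_vertex ds (rot180 t p)).
  { intros p [m [Hm Hin]]. unfold ntiles in Hm. exists (length ds - m). split; [unfold ntiles; lia|].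
    destruct (KV m ltac:(lia)) as [K1 K2].
    unfold corners in Hin |- *. cbn [In] in Hin |- *.
    destruct Hin as [<-|[<-|[<-|[<-|[]]]]]; unfold rot180;
    repeat (first [left; cbn [fst snd]; peq | right]). }
  assert (E1 : forall p q, snake_edge ds p q -> snake_edge ds (rot180 t p) (rot180 t q)).
  { intros p q [m [Hm [s [Hin Hs]]]]. unfold ntiles in Hm. exists (length ds - m). split; [unfold ntiles; lia|].
    destruct (KV m ltac:(lia)) as [K1 K2].
    unfold sides in Hin. cbn [In] in Hin.
    destruct Hin as [<-|[<-|[<-|[<-|[]]]]];
    [exists (north (TP ds (length ds - m))) | exists (south (TP ds (length ds - m)))
    | exists (east (TP ds (length ds - m))) | exists (west (TP ds (length ds - m)))];
    (split; [unfold sides; cbn [In]; repeat (first [left; reflexivity | right]) |]);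
    destruct Hs as [Hs|Hs]; unfold south, north, east, west in Hs; injection Hs; intros <- <-;
    unfold north, south, east, west, rot180; cbn [fst snd]; first [left; peq | right; peq]. }
  exists h. split; [unfold ntiles; lia|]. fold t. split.
  - intros p; split; [apply V1|]. intros H. rewrite <- (rot_invol t p). apply V1; auto.
  - intros p q; split; [apply E1|]. intros H. rewrite <- (rot_invol t p), <- (rot_invol t q). apply E1; auto.
Qed.

Definition fcan (s : seg) : bool :=
  let '((a, b), (c, d)) := s in if Z.eqb b d then Z.even (a + b) else negb (Z.even (a + b)).

Lemma fcan_sign ds : sign_function ds fcan.
Proof.
  intros i _. destruct (TP ds i) as [x y]. unfold fcan, north, south, west, east; cbn [fst snd].
  rewrite !Z.eqb_refl. rewrite (proj2 (Z.eqb_neq y (y + 1))) by lia.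
  replace (x + (y + 1))%Z with (x + y + 1)%Z by lia. replace (x + 1 + y)%Z with (x + y + 1)%Z by lia.
  rewrite Zeven_p1. destruct (Z.even (x + y)); simpl; repeat split; congruence.
Qed.

Lemma fcan_north ds k : fcan (north (TP ds k)) = Nat.even (S k).
Proof.
  pose proof (tp_sum ds k). destruct (TP ds k) as [x y]. unfold fcan, north; cbn [fst snd] in *.
  rewrite Z.eqb_refl. replace (x + (y + 1))%Z with (Z.of_nat (S k)) by lia. apply Zeven_nat.
Qed.

Lemma fcan_east ds k : fcan (east (TP ds k)) = negb (Nat.even (S k)).
Proof.
  pose proof (tp_sum ds k). destruct (TP ds k) as [x y]. unfold fcan, east; cbn [fst snd] in *.
  rewrite (proj2 (Z.eqb_neq y (y + 1))) by lia.
  replace (x + 1 + y)%Z with (Z.of_nat (S k)) by lia. rewrite Zeven_nat. reflexivity.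
Qed.

Lemma W_formula ds j : j <= length ds + 1 ->
  fcan (E ds (north (TP ds (length ds))) j) = if Bf ds true j then Nat.even j else negb (Nat.even j).
Proof.
  intros Hj. destruct j as [|k]; [reflexivity|].
  cbn [E Bf]. destruct (Nat.ltb_spec k (length ds)).
  - unfold shared_edge. destruct (nth k ds false); [apply fcan_north | apply fcan_east].
  - replace k with (length ds) by lia. apply fcan_north.
Qed.

Theorem theorem3p7 (ds : list bool) :
  palindromic_even ds <-> rot_sym_center ds.
Proof.
  split.
  - intros [a [Hpos [Hev [Hpal [Hn [f [ed [s [Hsf [Hed Hw]]]]]]]]]].
    pose proof (antipal_of_pal s a Hpos Hev Hpal) as Ha.
    rewrite <- Hw, w_eq in Ha. pose proof (proj1 (antipal_pointwise (fun j => f (E ds ed j)) (length ds + 2)) Ha) as Ha0. clear Ha. rename Ha0 into Ha. cbv beta in Ha.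
    assert (Hb : exists bed : bool, ed = if bed then north (TP ds (length ds)) else east (TP ds (length ds))).
    { destruct Hed; [exists true | exists false]; auto. }
    destruct Hb as [bed ->].
    destruct (pal_from_anti (fun j => f (E ds (if bed then north (TP ds (length ds)) else east (TP ds (length ds))) j))
                (Bf ds bed) (length ds)) as [HE HB].
    + intros j Hj. apply recur; auto. lia.
    + intros j Hj. replace (length ds + 2 - 1 - j) with (length ds + 2 - 1 - j) by lia. apply Ha; lia.
    + apply pal_rot; auto. intros k Hk. pose proof (HB (S k) ltac:(lia)) as H.
      replace (length ds + 1 - S k) with (S (length ds - 1 - k)) in H by lia.
      cbn [Bf] in H. rewrite (proj2 (Nat.ltb_lt _ _) Hk) in H.
      rewrite (proj2 (Nat.ltb_lt (length ds - 1 - k) (length ds)) ltac:(lia)) in H. exact H.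
  - intros Hr. destruct (rot_pal ds Hr) as [He Hp].
    set (W := fun j => fcan (E ds (north (TP ds (length ds))) j)).
    assert (Hanti : forall j, j < length ds + 2 -> W (length ds + 2 - 1 - j) = negb (W j)).
    { intros j Hj. unfold W. rewrite !W_formula by lia.
      replace (length ds + 2 - 1 - j) with (length ds + 1 - j) by lia.
      rewrite (even_rev _ _ He) by lia.
      assert (HB : Bf ds true (length ds + 1 - j) = Bf ds true j).
      { destruct j as [|k].
        - replace (length ds + 1 - 0) with (S (length ds)) by lia. cbn [Bf]. rewrite Nat.ltb_irrefl. reflexivity.
        - destruct (Nat.eq_dec k (length ds)) as [->|Hk].
          + replace (length ds + 1 - S (length ds)) with 0 by lia. cbn [Bf]. rewrite Nat.ltb_irrefl. reflexivity.
          + replace (length ds + 1 - S k) with (S (length ds - 1 - k)) by lia. cbn [Bf].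
            rewrite (proj2 (Nat.ltb_lt k (length ds))) by lia.
            rewrite (proj2 (Nat.ltb_lt (length ds - 1 - k) (length ds))) by lia.
            apply Hp. lia. }
      rewrite HB. destruct (Bf ds true j), (Nat.even j); reflexivity. }
    apply antipal_pointwise in Hanti.
    destruct (blocks_exist (map W (seq 0 (length ds + 2)))) as [s [a [Hpos Hbl]]].
    assert (Hlen : list_sum a = length ds + 2).
    { rewrite <- (blocks_length s a), Hbl, length_map, length_seq. reflexivity. }
    rewrite <- Hbl in Hanti. assert (Hne : a <> []) by (intros ->; simpl in Hlen; lia).
    pose proof (pal_of_antipal s a Hpos Hne Hanti) as Hanti2. clear Hanti. rename Hanti2 into Hanti.
    destruct Hanti as [HE Hpal].
    exists a. split; [auto|]. split; [auto|]. split; [auto|].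
    split. { unfold ntiles. lia. }
    exists fcan, (north (TP ds (length ds))), s. split; [apply fcan_sign|]. split; [left; reflexivity|].
    rewrite w_eq, Hbl. reflexivity.
Qed.
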